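(* In the setting described in the context, every feasible solution of RLO-CCU-SD satisfies $\Gamma\in\Theta$ and $\Gamma_{\hat{i}}=\underline{\Gamma}_{\hat{i}}$ for some $\hat{i}\in\hat{I}$. Conversely, if $\sum_{j\in J}a_{ij}\hat{x}_j\ge b_i$ for all $i\in I$, then for every $\Gamma\in\Theta$ satisfying $\Gamma_{\hat{i}}=\underline{\Gamma}_{\hat{i}}$ for some $\hat{i}\in\hat{I}$ there exists $(c,u,y,z,\pi,\varphi,\lambda,\mu)$ such that $(\Gamma,c,u,y,z,\pi,\varphi,\lambda,\mu)$ is feasible for RLO-CCU-SD.
   Context: Let $I=\{1,\dots,m\}$, $J=\{1,\dots,n\}$. Given are $a_{ij}\in\mathbb{R}$, $b\in\mathbb{R}^m$, index sets $J_i\subseteq J$, nonnegative numbers $\alpha_{ij}$ ($j\in J_i,i\in I$), an observed point $\hat{x}\in\mathbb{R}^n$, a prior $\hat{\Gamma}\in\mathbb{R}^m$ and a norm $\|\cdot\|$ on $\mathbb{R}^m$. For $i\in I$ and $x\in\mathbb{R}^n$ let $j^i_1(x),\dots,j^i_{|J_i|}(x)$ order $J_i$ so that $\alpha_{ij^i_k(x)}|x_{j^i_k(x)}|$ is the $k$-th largest element of $\{\alpha_{ij}|x_j|\}_{j\in J_i}$, and for $\Gamma_i\in[0,|J_i|]$ let $P_i(\Gamma_i,x)=\sum_{k=1}^{\lfloor\Gamma_i\rfloor}\alpha_{ij^i_k(x)}|x_{j^i_k(x)}|+(\Gamma_i-\lfloor\Gamma_i\rfloor)\alpha_{ij^i_{\lceil\Gamma_i\rceil}(x)}|x_{j^i_{\lceil\Gamma_i\rceil}(x)}|$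 (last term $0$ for integer $\Gamma_i$). Let $s_i=\sum_{j\in J}a_{ij}\hat{x}_j-b_i$, $\hat{I}=\{i\in I:0\le s_i\le\sum_{j\in J_i}\alpha_{ij}|\hat{x}_j|\}$, and for $i\in\hat{I}$ let $\underline{\Gamma}_i=\min\{\sum_{j\in J_i}w_j:\sum_{j\in J_i}\alpha_{ij}|\hat{x}_j|w_j=s_i,\ 0\le w_j\le1\}$, so $s_i=P_i(\underline{\Gamma}_i,\hat{x})$. Standing assumption: for each $i\in\hat{I}$, $\underline{\Gamma}_i$ is the unique $\Gamma_i\in[0,|J_i|]$ with $s_i=P_i(\Gamma_i,\hat{x})$. Let $\Theta=\{\Gamma\in\mathbb{R}^m:\Gamma_i\in[0,\underline{\Gamma}_i]\ \forall i\in\hat{I};\ \Gamma_i\in[0,|J_i|]\ \forall i\in I\setminus\hat{I}\}$. The problem RLO-CCU-SD is \[ \min_{\Gamma,c,u,y,z,\pi,\varphi,\lambda,\mu}\ \|\Gamma-\hat{\Gamma}\| \] subject to: $\sum_{j\in J}c_j\hat{x}_j-\sum_{i\in I}b_i\pi_i=0$; $\alpha_{ij}\hat{x}_j+u_{ij}\ge0$ and $-\alpha_{ij}\hat{x}_j+u_{ij}\ge0$ ($j\in J_i,i\in I$); $y_{ij}+z_i\ge u_{ij}$ ($j\in J_i,i\in I$); $\sum_{j\in J}a_{ij}\hat{x}_j-\sum_{j\in J_i}y_{ij}-\Gamma_iz_i\ge b_i$ ($i\in I$); $y_{ij},z_i\ge0$; $0\le\Gamma_i\le|J_i|$ ($i\in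 I$); $\sum_{i\in I}\pi_i=1$; $\sum_{i\in I}a_{ij}\pi_i+\sum_{i\in I:j\in J_i}\alpha_{ij}(\lambda_{ij}-\mu_{ij})=c_j$ ($j\in J$); $\varphi_{ij}\le\pi_i$ and $\varphi_{ij}=\lambda_{ij}+\mu_{ij}$ ($j\in J_i,i\in I$); $\sum_{j\in J_i}\varphi_{ij}\le\Gamma_i\pi_i$ ($i\in I$); $\pi_i,\varphi_{ij},\lambda_{ij},\mu_{ij}\ge0$ ($j\in J_i,i\in I$). *)

(* Defs.v *)
From mathcomp Require Import all_boot all_order all_algebra.
From mathcomp Require Import reals.
Set Implicit Arguments. Unset Strict Implicit. Unset Printing Implicit Defensive.
Import Order.TTheory GRing.Theory Num.Theory.
Local Open Scope ring_scope.

Section RLO.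
Variables (R : realType) (m n : nat).
Variables (a : 'I_m -> 'I_n -> R) (b : 'I_m -> R) (Js : 'I_m -> {set 'I_n})
          (alpha : 'I_m -> 'I_n -> R) (xhat : 'I_n -> R).

(* the values {alpha_ij |x_j|}_{j in J_i} sorted in nonincreasing order:
   the k-th largest (1-indexed) is (sorted_vals i x)`_(k-1) *)
Definition sorted_vals (i : 'I_m) (x : 'I_n -> R) : seq R :=
  sort (fun u v => v <= u) [seq alpha i j * `|x j| | j <- enum (Js i)].

(* P_i(G, x) = sum_{k=1}^{floor G} (k-th largest) + (G - floor G) (ceil G-th largest);
   for G >= 0 non-integer, ceil G = floor G + 1, i.e. 0-based index floor G;
   for integer G the last term vanishes since G - floor G = 0. *)
Definition Pfun (i : 'I_m) (G : R) (x : 'I_n -> R) : R :=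
  \sum_(k < Num.truncn G) (sorted_vals i x)`_k
  + (G - (Num.truncn G)%:R) * (sorted_vals i x)`_(Num.truncn G).

Definition sres (i : 'I_m) : R := \sum_(j < n) a i j * xhat j - b i.

Definition in_Ihat (i : 'I_m) : Prop :=
  0 <= sres i /\ sres i <= \sum_(j in Js i) alpha i j * `|xhat j|.

Definition lp_feasible_w (i : 'I_m) (w : 'I_n -> R) : Prop :=
  \sum_(j in Js i) alpha i j * `|xhat j| * w j = sres i /\
  (forall j, j \in Js i -> 0 <= w j /\ w j <= 1).

Definition is_Gamma_low (i : 'I_m) (g : R) : Prop :=
  (exists w, lp_feasible_w i w /\ \sum_(j in Js i) w j = g) /\
  (forall w, lp_feasible_w i w -> g <= \sum_(j in Js i) w j).

Definition Theta (gl : 'I_m -> R) (G : 'I_m -> R) : Prop :=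
  forall i, (in_Ihat i -> 0 <= G i /\ G i <= gl i) /\
            (~ in_Ihat i -> 0 <= G i /\ G i <= #|Js i|%:R).

Definition feasible (G : 'I_m -> R) (c : 'I_n -> R) (u y : 'I_m -> 'I_n -> R)
  (z pi : 'I_m -> R) (phi lam mu : 'I_m -> 'I_n -> R) : Prop :=
  [/\ \sum_(j < n) c j * xhat j - \sum_(i < m) b i * pi i = 0,
      (forall i j, j \in Js i ->
         [/\ alpha i j * xhat j + u i j >= 0 /\ - alpha i j * xhat j + u i j >= 0,
             y i j + z i >= u i j, y i j >= 0,
             phi i j <= pi i /\ phi i j = lam i j + mu i j &
             [/\ phi i j >= 0, lam i j >= 0 & mu i j >= 0]]),
      (forall i, [/\ \sum_(j < n) a i j * xhat j - \sum_(j in Js i) y i j - G i * z i >= b i,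
         z i >= 0, 0 <= G i /\ G i <= #|Js i|%:R,
         \sum_(j in Js i) phi i j <= G i * pi i & pi i >= 0]),
      \sum_(i < m) pi i = 1 &
      (forall j, \sum_(i < m) a i j * pi i
                 + \sum_(i < m | j \in Js i) alpha i j * (lam i j - mu i j) = c j)].

End RLO.

(* Main.v *)
Require Import Defs.
From mathcomp Require Import all_boot all_order all_algebra.
From mathcomp Require Import reals.
From mathcomp Require Import ring lra.
Import Order.TTheory GRing.Theory Num.Theory.
Local Open Scope ring_scope.

Lemma sum_ind (R : realType) (I : finType) (P : pred I) (j : I) (F : I -> R) :
  \sum_(l | P l) (l == j)%:R * F l = (P j)%:R * F j.
Proof.
case Pj: (P j).
  rewrite (bigD1 j) //= eqxx mul1r big1 ?addr0 // => l /andP[_ /negbTE ->].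
  by rewrite mul0r.
rewrite mul0r big1 // => l Pl.
have /negbTE -> : l != j by apply/eqP => E; rewrite E Pj in Pl.
by rewrite mul0r.
Qed.

Lemma exch (R : realType) (n : nat) (A : {set 'I_n}) (v w : 'I_n -> R) (s g : R) j k :
  (forall l, l \in A -> 0 <= v l) ->
  (forall w', \sum_(l in A) v l * w' l = s ->
      (forall l, l \in A -> 0 <= w' l /\ w' l <= 1) -> g <= \sum_(l in A) w' l) ->
  \sum_(l in A) v l * w l = s -> (forall l, l \in A -> 0 <= w l /\ w l <= 1) ->
  \sum_(l in A) w l = g ->
  j \in A -> k \in A -> v k < v j -> 0 < w k -> w j = 1.
Proof.
move=> v0 opt sw w01 swg jA kA vkj wk.
have [wj0 wj1] := w01 j jA.
have [wk0 wk1] := w01 k kA.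
have vk0 := v0 k kA.
have vjpos : 0 < v j by apply: le_lt_trans vkj.
have kj : k != j by apply/eqP => E; rewrite E ltxx in vkj.
apply/eqP; rewrite eq_le wj1 /=; rewrite leNgt; apply/negP => wjlt.
set e := Num.min (w k) (1 - w j).
have e0 : 0 < e by rewrite lt_min wk subr_gt0 wjlt.
have ewk : e <= w k by rewrite ge_min lexx.
have ewj : e <= 1 - w j by rewrite ge_min lexx orbT.
set r := v k / v j.
have r0 : 0 <= r by rewrite divr_ge0 // ltW.
have r1 : r < 1 by rewrite ltr_pdivrMr // mul1r.
pose w' l := w l + (l == j)%:R * (e * r) - (l == k)%:R * e.
have := opt w'.
have -> : \sum_(l in A) w' l = g + e * r - e.
  rewrite /w' sumrB big_split /= swg.
  by rewrite (@sum_ind _ _ _ _ (fun _ => e * r)) (@sum_ind _ _ _ _ (fun _ => e)) jA kA mul1r mul1r.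
have -> : \sum_(l in A) v l * w' l = s.
  rewrite /w'.
  under eq_bigr => l _ do rewrite mulrBr mulrDr mulrCA [v l * (_ * e)]mulrCA.
  rewrite sumrB big_split /= sw.
  rewrite (@sum_ind _ _ _ _ (fun l => v l * (e * r))) (@sum_ind _ _ _ _ (fun l => v l * e)) jA kA !mul1r.
  have -> : v j * (e * (v k / v j)) = v k * e.
    by field; rewrite gt_eqF.
  by rewrite addrK.
move=> /(_ erefl).
have H : forall l, l \in A -> 0 <= w' l /\ w' l <= 1.
  move=> l lA; rewrite /w'.
  have [wl0 wl1] := w01 l lA.
  have jk : j != k by rewrite eq_sym.
  case: (eqVneq l j) => [->|lj].
    rewrite (negbTE jk) mul1r mul0r subr0.
    split; first by rewrite addr_ge0 // mulr_ge0 // ltW.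
    have : e * r <= e by nra.
    lra.
  case: (eqVneq l k) => [->|lk]; rewrite ?mul1r ?mul0r ?addr0 ?subr0.
    lra.
  lra.
move=> /(_ H).
have : e * r < e by nra.
lra.
Qed.

Lemma le_sum1 (R : realType) (n : nat) (A : {set 'I_n}) (v : 'I_n -> R) l :
  (forall l, l \in A -> 0 <= v l) -> l \in A -> v l <= \sum_(k in A) v k.
Proof.
move=> v0 lA; rewrite (bigD1 l) //= lerDl sumr_ge0 // => k /andP[kA _].
exact: v0.
Qed.

Lemma theta_ex (R : realType) (n : nat) (A : {set 'I_n}) (v w : 'I_n -> R) (s g G : R) :
  (forall l, l \in A -> 0 <= v l) ->
  (forall w', \sum_(l in A) v l * w' l = s ->
      (forall l, l \in A -> 0 <= w' l /\ w' l <= 1) -> g <= \sum_(l in A) w' l) ->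
  \sum_(l in A) v l * w l = s -> (forall l, l \in A -> 0 <= w l /\ w l <= 1) ->
  \sum_(l in A) w l = g -> 0 <= G -> G <= g ->
  exists th, 0 <= th /\ \sum_(l in A) Num.max (v l - th) 0 + G * th <= s.
Proof.
move=> v0 opt sw w01 swg G0 Gg.
have [th [th0 [HB HC]]] : exists th, 0 <= th /\
   (forall l, l \in A -> 0 < w l -> th <= v l) /\
   (forall l, l \in A -> th < v l -> w l = 1).
  case: (pickP [pred l | (l \in A) && (0 < w l)]) => [k0 Pk0 | noP].
    case: (arg_minP v Pk0) => k /andP[kA wk] Hk.
    exists (v k); split; first exact: v0.
    split.
      by move=> l lA wl; apply: Hk; rewrite /= lA wl.
    by move=> l lA lt; apply: (@exch _ _ _ _ _ _ _ _ _ v0 opt sw w01 swg lA kA lt wk).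
  exists (\sum_(k in A) v k); split; first by rewrite sumr_ge0.
  split.
    by move=> l lA wl; move: (noP l); rewrite /= lA wl.
  by move=> l lA; rewrite ltNge le_sum1.
exists th; split => //.
have E : forall l, l \in A -> v l * w l = Num.max (v l - th) 0 + th * w l.
  move=> l lA; have [wl0 wl1] := w01 l lA.
  case: (ltrP th (v l)) => h.
    rewrite (HC l lA h) max_l; last by rewrite subr_ge0 ltW.
    by rewrite !mulr1 subrK.
  rewrite max_r; last by rewrite subr_le0.
  rewrite add0r.
  have [->|wn] := eqVneq (w l) 0; first by rewrite !mulr0.
  have wp : 0 < w l by rewrite lt_neqAle eq_sym wn wl0.
  have := HB l lA wp => h2.
  have -> : v l = th by apply/eqP; rewrite eq_le h h2.
  by [].
rewrite -sw (eq_bigr _ E) big_split /= -mulr_sumr swg.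
rewrite lerD2l; nra.
Qed.
Lemma Pfun_full (R : realType) (m n : nat) (Js : 'I_m -> {set 'I_n})
  (alpha : 'I_m -> 'I_n -> R) (i : 'I_m) (x : 'I_n -> R) :
  Pfun Js alpha i (#|Js i|%:R) x = \sum_(j in Js i) alpha i j * `|x j|.
Proof.
rewrite /Pfun.
have -> : Num.truncn (#|Js i|%:R : R) = #|Js i| by rewrite natrK.
rewrite subrr mul0r addr0.
have Hs : size (sorted_vals Js alpha i x) = #|Js i|.
  by rewrite /sorted_vals size_sort size_map -cardE.
transitivity (\sum_(v <- sorted_vals Js alpha i x) v).
  by rewrite (big_nth 0) Hs big_mkord.
rewrite /sorted_vals.
rewrite (perm_big _ (introT permPl (perm_sort _ _))) big_map.
by rewrite big_enum.
Qed.
Lemma part1 (R : realType) (m n : nat)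
  (a : 'I_m -> 'I_n -> R) (b : 'I_m -> R) (Js : 'I_m -> {set 'I_n})
  (alpha : 'I_m -> 'I_n -> R) (xhat : 'I_n -> R) (gl : 'I_m -> R)
  (alpha_ge0 : forall i j, j \in Js i -> 0 <= alpha i j)
  (gl_def : forall i, in_Ihat a b Js alpha xhat i -> is_Gamma_low a b Js alpha xhat i (gl i))
  (gl_unique : forall i, in_Ihat a b Js alpha xhat i ->
     forall g, 0 <= g -> g <= #|Js i|%:R ->
       sres a b xhat i = Pfun Js alpha i g xhat -> g = gl i) :
  (forall G c u y z pi phi lam mu,
     feasible a b Js alpha xhat G c u y z pi phi lam mu ->
     Theta a b Js alpha xhat gl G /\
     exists ih, in_Ihat a b Js alpha xhat ih /\ G ih = gl ih).
Proof.
move=> G c u y z pi phi lam mu [Hobj Hj Hi Hpi Hc].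
have Hs : forall i, \sum_(j in Js i) y i j + G i * z i <= sres a b xhat i.
  by move=> i; have [H1 _ _ _ _] := Hi i; rewrite /sres; lra.
have Hnorm : forall i j, j \in Js i -> `|alpha i j * xhat j| = alpha i j * `|xhat j|.
  by move=> i j jJ; rewrite normrM ger0_norm // alpha_ge0.
have Huv : forall i j, j \in Js i -> alpha i j * `|xhat j| <= u i j.
  move=> i j jJ; have [[h1 h2] _ _ _ _] := Hj i j jJ.
  by rewrite -Hnorm // ler_norml; apply/andP; split; lra.
have Hv0 : forall i j, j \in Js i -> 0 <= alpha i j * `|xhat j|.
  by move=> i j jJ; rewrite mulr_ge0 ?alpha_ge0.
have Hs0 : forall i, 0 <= sres a b xhat i.
  move=> i; apply: le_trans (Hs i); have [_ z0 [G0 _] _ _] := Hi i.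
  apply: addr_ge0; last exact: mulr_ge0.
  by apply: sumr_ge0 => j jJ; have [_ _ y0 _ _] := Hj i j jJ.
have HTheta : Theta a b Js alpha xhat gl G.
  move=> i; have [_ z0 GJ _ _] := Hi i; split => // Hih; split; first by case: GJ.
  have [[w [[sw w01] swg]] opt] := gl_def i Hih.
  have E1 : sres a b xhat i <= \sum_(j in Js i) y i j + z i * gl i.
    rewrite -sw -swg mulr_sumr -big_split /=; apply: ler_sum => j jJ.
    have [_ yz y0 _ _] := Hj i j jJ; have [w0 w1] := w01 j jJ.
    have := Huv i j jJ; nra.
  have [zz|zn] := eqVneq (z i) 0.
    have sv : sres a b xhat i = \sum_(j in Js i) alpha i j * `|xhat j|.
      apply/eqP; rewrite eq_le; case: Hih => _ -> /=.
      apply: le_trans (Hs i); rewrite zz mulr0 addr0; apply: ler_sum => j jJ.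
      have [_ yz _ _ _] := Hj i j jJ; have := Huv i j jJ; rewrite zz addr0 in yz; lra.
    have := gl_unique i Hih (#|Js i|%:R) (ler0n _ _) (lexx _).
    rewrite Pfun_full => /(_ sv) <-; by case: GJ.
  have zp : 0 < z i by rewrite lt_neqAle eq_sym zn z0.
  have := Hs i; nra.
split => //.
set T := fun i => pi i * sres a b xhat i
   + \sum_(j in Js i) alpha i j * xhat j * (lam i j - mu i j).
have Hterm : forall i j, j \in Js i ->
    - (alpha i j * `|xhat j| * phi i j) <= alpha i j * xhat j * (lam i j - mu i j).
  move=> i j jJ; have [_ _ _ [_ ->] [_ l0 m0]] := Hj i j jJ.
  have := Hnorm i j jJ; move=> hn.
  have : `|alpha i j * xhat j| <= alpha i j * `|xhat j| by rewrite hn.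
  rewrite ler_norml => /andP[h1 h2]; nra.
have Hphi : forall i, \sum_(j in Js i) alpha i j * `|xhat j| * phi i j <= pi i * sres a b xhat i.
  move=> i; have [_ z0 _ sphi p0] := Hi i.
  have A1 : \sum_(j in Js i) alpha i j * `|xhat j| * phi i j <=
            \sum_(j in Js i) (pi i * y i j + phi i j * z i).
    apply: ler_sum => j jJ; have [_ yz y0 [pp _] [f0 _ _]] := Hj i j jJ.
    have := Huv i j jJ; nra.
  rewrite big_split /= -mulr_suml -mulr_sumr in A1.
  have := Hs i; nra.
have T0 : forall i, 0 <= T i.
  move=> i; rewrite /T.
  have : - \sum_(j in Js i) alpha i j * `|xhat j| * phi i j <=
         \sum_(j in Js i) alpha i j * xhat j * (lam i j - mu i j).
    by rewrite -sumrN; apply: ler_sum => j jJ; apply: Hterm.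
  have := Hphi i; lra.
have sumT : \sum_i T i = 0.
  have E : \sum_(j < n) c j * xhat j = \sum_i pi i * \sum_(j < n) a i j * xhat j
      + \sum_i \sum_(j in Js i) alpha i j * xhat j * (lam i j - mu i j).
    under eq_bigr => j _ do rewrite -Hc mulrDl.
    rewrite big_split /=; congr (_ + _).
      under eq_bigr => j _ do rewrite mulr_suml.
      rewrite exchange_big /=; apply: eq_bigr => i _; rewrite mulr_sumr.
      by apply: eq_bigr => j _; ring.
    under eq_bigr => j _ do rewrite mulr_suml.
    rewrite (exchange_big_dep xpredT) //=; apply: eq_bigr => i _.
    by apply: eq_bigr => j _; ring.
  rewrite /T big_split /=.
  have E2 : \sum_i pi i * sres a b xhat i =
      \sum_i pi i * \sum_(j < n) a i j * xhat j - \sum_i b i * pi i.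
    by rewrite -sumrB; apply: eq_bigr => i _; rewrite /sres; ring.
  rewrite E2; lra.
have Tz := psumr_eq0P (fun i _ => T0 i) sumT.
have [ih pih] : exists ih, 0 < pi ih.
  case: (pickP (fun i => 0 < pi i)) => [i h|h]; first by exists i.
  exfalso; have : \sum_i pi i = 0.
    apply: big1 => i _; have [_ _ _ _ p0] := Hi i.
    by apply/eqP; rewrite eq_le p0 andbT leNgt h.
  by rewrite Hpi; move/eqP; rewrite oner_eq0.
have Tih := Tz ih isT; rewrite /T in Tih.
set s := sres a b xhat ih in Tih *.
have pin : pi ih != 0 by rewrite gt_eqF.
pose w j := phi ih j / pi ih.
have w01 : forall j, j \in Js ih -> 0 <= w j /\ w j <= 1.
  move=> j jJ; have [_ _ _ [pp _] [f0 _ _]] := Hj ih j jJ.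
  rewrite /w; split; first by apply: divr_ge0 => //; apply: ltW.
  by rewrite ler_pdivrMr // mul1r.
set S := \sum_(j in Js ih) alpha ih j * `|xhat j| * w j.
have SP : S * pi ih = \sum_(j in Js ih) alpha ih j * `|xhat j| * phi ih j.
  rewrite /S mulr_suml; apply: eq_bigr => j _; rewrite /w -mulrA divfK //.
have sS : s <= S.
  have : - \sum_(j in Js ih) alpha ih j * `|xhat j| * phi ih j <=
         \sum_(j in Js ih) alpha ih j * xhat j * (lam ih j - mu ih j).
    by rewrite -sumrN; apply: ler_sum => j jJ; apply: Hterm.
  rewrite -SP => h.
  have : pi ih * s <= pi ih * S by lra.
  by rewrite ler_pM2l.
have Sle : S <= \sum_(j in Js ih) alpha ih j * `|xhat j|.
  apply: ler_sum => j jJ; have [w0 w1] := w01 j jJ; have := Hv0 ih j jJ; nra.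
have Ihih : in_Ihat a b Js alpha xhat ih := conj (Hs0 ih) (le_trans sS Sle).
exists ih; split => //.
apply/eqP; rewrite eq_le; have [H1 _] := HTheta ih; have [_ ->] := H1 Ihih; rewrite /=.
have [_ opt] := gl_def ih Ihih.
have S0 : 0 <= S := le_trans (Hs0 ih) sS.
pose t := s / S.
have t0 : 0 <= t by rewrite divr_ge0 // Hs0.
have t1 : t <= 1.
  have [SS|SS] := eqVneq S 0; first by rewrite /t SS invr0 mulr0.
  by rewrite /t ler_pdivrMr ?mul1r // lt_neqAle eq_sym SS S0.
have tS : t * S = s.
  have [SS|SS] := eqVneq S 0; last by rewrite /t divfK.
  by rewrite SS mulr0; apply/eqP; rewrite eq_le Hs0 /= -SS.
have sw0 : 0 <= \sum_(j in Js ih) w j by apply: sumr_ge0 => j jJ; case: (w01 j jJ).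
have swG : \sum_(j in Js ih) w j <= G ih.
  have [_ _ _ sphi _] := Hi ih.
  have : (\sum_(j in Js ih) w j) * pi ih <= G ih * pi ih.
    suff -> : (\sum_(j in Js ih) w j) * pi ih = \sum_(j in Js ih) phi ih j by [].
    by rewrite mulr_suml; apply: eq_bigr => j _; rewrite /w divfK.
  by rewrite ler_pM2r.
have h : gl ih <= \sum_(j in Js ih) (t * w j).
  apply: opt; split.
    transitivity (t * S); last by [].
    rewrite /S mulr_sumr; apply: eq_bigr => j _; ring.
  move=> j jJ; have [w0 w1] := w01 j jJ; split; nra.
rewrite -mulr_sumr in h.
have : t * (\sum_(j in Js ih) w j) <= \sum_(j in Js ih) w j by nra.
lra.
Qed.
Lemma part2 (R : realType) (m n : nat)
  (a : 'I_m -> 'I_n -> R) (b : 'I_m -> R) (Js : 'I_m -> {set 'I_n})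
  (alpha : 'I_m -> 'I_n -> R) (xhat : 'I_n -> R) (gl : 'I_m -> R)
  (alpha_ge0 : forall i j, j \in Js i -> 0 <= alpha i j)
  (gl_def : forall i, in_Ihat a b Js alpha xhat i -> is_Gamma_low a b Js alpha xhat i (gl i))
  (gl_unique : forall i, in_Ihat a b Js alpha xhat i ->
     forall g, 0 <= g -> g <= #|Js i|%:R ->
       sres a b xhat i = Pfun Js alpha i g xhat -> g = gl i) :
  ((forall i, \sum_(j < n) a i j * xhat j >= b i) ->
   forall G, Theta a b Js alpha xhat gl G ->
   (exists ih, in_Ihat a b Js alpha xhat ih /\ G ih = gl ih) ->
   exists c u y z pi phi lam mu,
     feasible a b Js alpha xhat G c u y z pi phi lam mu).
Proof.
move=> Hab G HT [ih [Hih HG]].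
have Hs0 : forall i, 0 <= sres a b xhat i by move=> i; rewrite /sres subr_ge0.
have Hnorm : forall i j, j \in Js i -> `|alpha i j * xhat j| = alpha i j * `|xhat j|.
  by move=> i j jJ; rewrite normrM ger0_norm // alpha_ge0.
have Hv0 : forall i j, j \in Js i -> 0 <= alpha i j * `|xhat j|.
  by move=> i j jJ; rewrite mulr_ge0 ?alpha_ge0.
have dec : forall i, in_Ihat a b Js alpha xhat i \/
    (~ in_Ihat a b Js alpha xhat i /\
     \sum_(j in Js i) alpha i j * `|xhat j| < sres a b xhat i).
  move=> i; case: (boolP (sres a b xhat i <= \sum_(j in Js i) alpha i j * `|xhat j|)) => h.
    by left; split.
  right; split; first by case=> _ h'; rewrite h' in h.
  by rewrite ltNge.
have glJ : forall i, in_Ihat a b Js alpha xhat i -> gl i <= #|Js i|%:R.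
  move=> i Hi; have [[w [[_ w01] <-]] _] := gl_def i Hi.
  rewrite -sumr_const; apply: ler_sum => j jJ; by case: (w01 j jJ).
have GJ : forall i, 0 <= G i /\ G i <= #|Js i|%:R.
  move=> i; have [H1 H2] := HT i; case: (dec i) => [Hi|[Hi _]].
    have [G0 Gg] := H1 Hi; split => //; apply: le_trans Gg (glJ i Hi).
  exact: H2.
have Hth : forall i, exists th : R, 0 <= th /\
    \sum_(l in Js i) Num.max (alpha i l * `|xhat l| - th) 0 + G i * th <= sres a b xhat i.
  move=> i; case: (dec i) => [Hi|[_ h]].
    have [[w [[sw w01] swg]] opt] := gl_def i Hi.
    have [H1 _] := HT i; have [G0 Gg] := H1 Hi.
    apply: (@theta_ex _ _ _ (fun l => alpha i l * `|xhat l|) w _ (gl i)) => //.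
      exact: Hv0.
    by move=> w' h1 h2; apply: opt; split.
  exists 0; split => //; rewrite mulr0 addr0; apply: ltW; apply: le_lt_trans h.
  apply: ler_sum => j jJ; rewrite subr0 max_l //; exact: Hv0.
have [th Hth'] := fin_all_exists Hth.
have [[w [[sw w01] swg]] _] := gl_def ih Hih.
pose pi i : R := (i == ih)%:R.
pose phi i j : R := (i == ih)%:R * w j.
pose lam i j : R := (i == ih)%:R * (((xhat j < 0)%R : bool)%:R * w j).
pose mu i j : R := (i == ih)%:R * (((0 <= xhat j)%R : bool)%:R * w j).
pose u i j : R := alpha i j * `|xhat j|.
pose y i j : R := Num.max (alpha i j * `|xhat j| - th i) 0.
pose c j : R := \sum_i a i j * pi i + \sum_(i | j \in Js i) alpha i j * (lam i j - mu i j).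
exists c, u, y, th, pi, phi, lam, mu.
split.
- have Ec : forall j, c j * xhat j =
      a ih j * xhat j - (j \in Js ih)%:R * (alpha ih j * `|xhat j| * w j).
    move=> j; rewrite /c.
    have -> : \sum_i a i j * pi i = a ih j.
      under eq_bigr => i _ do rewrite mulrC.
      by rewrite sum_ind /= mul1r.
    have -> : \sum_(i | j \in Js i) alpha i j * (lam i j - mu i j) =
       \sum_(i | j \in Js i) (i == ih)%:R * (alpha i j *
          (((((xhat j < 0)%R : bool)%:R - ((0 <= xhat j)%R : bool)%:R)) * w j)).
      by apply: eq_bigr => i _; rewrite /lam /mu; ring.
    rewrite sum_ind.
    case: (ltrP (xhat j) 0) => hx; [rewrite ltr0_norm // | rewrite ger0_norm //]; rewrite /=; ring.
  rewrite (eq_bigr _ (fun j _ => Ec j)) sumrB.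
  have -> : \sum_j (j \in Js ih)%:R * (alpha ih j * `|xhat j| * w j) =
      \sum_(j in Js ih) alpha ih j * `|xhat j| * w j.
    by rewrite [RHS]big_mkcond; apply: eq_bigr => j _; case: (j \in Js ih); rewrite /= ?mul1r ?mul0r.
  rewrite sw.
  have -> : \sum_i b i * pi i = b ih.
    under eq_bigr => i _ do rewrite mulrC.
    by rewrite sum_ind /= mul1r.
  rewrite /sres; ring.
- move=> i j jJ.
  have [th0 _] := Hth' i.
  have hu : - u i j <= alpha i j * xhat j <= u i j by rewrite -ler_norml Hnorm.
  move: hu => /andP[hu1 hu2].
  have hy0 : 0 <= y i j by rewrite /y le_max lexx orbT.
  have hyz : u i j <= y i j + th i.
    have : u i j - th i <= y i j by rewrite /y le_max lexx.
    lra.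
  split; [split; lra | exact: hyz | exact: hy0 | | ].
    case: (eqVneq i ih) => [Ei|ne].
      subst i; have [w0 w1] := w01 j jJ.
      rewrite /phi /pi /lam /mu eqxx /= !mul1r; split => //.
      by case: (ltrP (xhat j) 0) => hx /=; ring.
    rewrite /phi /pi /lam /mu (negbTE ne) /= !mul0r; split => //; ring.
  case: (eqVneq i ih) => [Ei|ne].
    subst i; have [w0 w1] := w01 j jJ.
    rewrite /phi /pi /lam /mu eqxx /= !mul1r.
    split => //; apply: mulr_ge0 => //; exact: ler0n.
  by rewrite /phi /pi /lam /mu (negbTE ne) /= !mul0r.
- move=> i; have [th0 hth] := Hth' i; split.
  + rewrite /sres in hth; rewrite /y; lra.
  + exact: th0.
  + exact: GJ i.
  + case: (eqVneq i ih) => [->|ne]; rewrite /phi /pi ?eqxx ?(negbTE ne).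
      by under eq_bigr do rewrite mul1r; rewrite swg HG mulr1.
    by rewrite mulr0 big1 // => j _; rewrite mul0r.
  + exact: ler0n.
- rewrite (bigD1 ih) //= /pi eqxx big1 ?addr0 // => i /negbTE ->; done.
- by [].
Qed.
Theorem lemma3 (R : realType) (m n : nat)
  (a : 'I_m -> 'I_n -> R) (b : 'I_m -> R) (Js : 'I_m -> {set 'I_n})
  (alpha : 'I_m -> 'I_n -> R) (xhat : 'I_n -> R) (gl : 'I_m -> R)
  (alpha_ge0 : forall i j, j \in Js i -> 0 <= alpha i j)
  (gl_def : forall i, in_Ihat a b Js alpha xhat i -> is_Gamma_low a b Js alpha xhat i (gl i))
  (gl_unique : forall i, in_Ihat a b Js alpha xhat i ->
     forall g, 0 <= g -> g <= #|Js i|%:R ->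
       sres a b xhat i = Pfun Js alpha i g xhat -> g = gl i) :
  (forall G c u y z pi phi lam mu,
     feasible a b Js alpha xhat G c u y z pi phi lam mu ->
     Theta a b Js alpha xhat gl G /\
     exists ih, in_Ihat a b Js alpha xhat ih /\ G ih = gl ih)
  /\
  ((forall i, \sum_(j < n) a i j * xhat j >= b i) ->
   forall G, Theta a b Js alpha xhat gl G ->
   (exists ih, in_Ihat a b Js alpha xhat ih /\ G ih = gl ih) ->
   exists c u y z pi phi lam mu,
     feasible a b Js alpha xhat G c u y z pi phi lam mu).
Proof.
split; [exact: (@part1 R m n a b Js alpha xhat gl alpha_ge0 gl_def gl_unique) | exact: (@part2 R m n a b Js alpha xhat gl alpha_ge0 gl_def gl_unique)].
Qed.
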